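(* Let $X$ be a real Banach lattice equipped with a sufficiently rich topology $\tau$. If $C\subseteq X_+$ is $\tau$-compact, then its solid hull $\operatorname{so}(C)$ is $\tau$-closed.
   Context: A locally convex Hausdorff topology $\tau$ on a Banach lattice $X$ is called sufficiently rich if (i) the space $X^\tau$ of $\tau$-continuous linear functionals on $X$ is a Banach lattice (with lattice operations given by the Riesz–Kantorovich formulas), and (ii) $X_+$ is $\tau$-closed. $\operatorname{so}(C)$ is the set of all $z\in X$ for which there exists $x\in C$ with $|z|\le|x|$ (the smallest solid set containing $C$). *)

(* Defs.v *)
From Stdlib Require Import Reals List.
Open Scope R_scope.

Definition IsLub {V : Type} (S : V -> Prop) (le : V -> V -> Prop) (x y z : V) : Prop :=
  S z /\ le x z /\ le y z /\ (forall w, S w -> le x w -> le y w -> le z w).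

Record IsBanachLattice {V : Type} (S : V -> Prop) (zero : V)
    (add : V -> V -> V) (opp : V -> V) (scal : R -> V -> V)
    (le : V -> V -> Prop) (N : V -> R) : Prop := {
  bl_S0 : S zero;
  bl_Sadd : forall x y, S x -> S y -> S (add x y);
  bl_Sopp : forall x, S x -> S (opp x);
  bl_Sscal : forall a x, S x -> S (scal a x);
  bl_addA : forall x y z, S x -> S y -> S z -> add x (add y z) = add (add x y) z;
  bl_addC : forall x y, S x -> S y -> add x y = add y x;
  bl_add0 : forall x, S x -> add x zero = x;
  bl_addN : forall x, S x -> add x (opp x) = zero;
  bl_scalA : forall a b x, S x -> scal a (scal b x) = scal (a * b) x;
  bl_scal1 : forall x, S x -> scal 1 x = x;
  bl_scalDr : forall a x y, S x -> S y -> scal a (add x y) = add (scal a x) (scal a y);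
  bl_scalDl : forall a b x, S x -> scal (a + b) x = add (scal a x) (scal b x);
  bl_refl : forall x, S x -> le x x;
  bl_antisym : forall x y, S x -> S y -> le x y -> le y x -> x = y;
  bl_trans : forall x y z, S x -> S y -> S z -> le x y -> le y z -> le x z;
  bl_le_add : forall x y z, S x -> S y -> S z -> le x y -> le (add x z) (add y z);
  bl_le_scal : forall a x y, S x -> S y -> 0 <= a -> le x y -> le (scal a x) (scal a y);
  bl_lattice : forall x y, S x -> S y -> exists z, IsLub S le x y z;
  bl_norm0 : forall x, S x -> N x = 0 -> x = zero;
  bl_normZ : forall a x, S x -> N (scal a x) = Rabs a * N x;
  bl_normD : forall x y, S x -> S y -> N (add x y) <= N x + N y;
  (* lattice norm: |x| <= |y| implies ||x|| <= ||y|| *)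
  bl_lattice_norm : forall x y ax ay, S x -> S y ->
      IsLub S le x (opp x) ax -> IsLub S le y (opp y) ay -> le ax ay -> N x <= N y;
  bl_complete : forall u : nat -> V, (forall n, S (u n)) ->
      (forall eps, 0 < eps -> exists M, forall m n, (M <= m)%nat -> (M <= n)%nat ->
          N (add (u m) (opp (u n))) < eps) ->
      exists x, S x /\ forall eps, 0 < eps -> exists M, forall n, (M <= n)%nat ->
          N (add (u n) (opp x)) < eps
}.

Record BanachLattice := {
  car :> Type;
  bzero : car;
  badd : car -> car -> car;
  bopp : car -> car;
  bscal : R -> car -> car;
  ble : car -> car -> Prop;
  bsup : car -> car -> car;
  bnorm : car -> R;
  bl_axioms : IsBanachLattice (fun _ => True) bzero badd bopp bscal ble bnorm;
  bsup_lub : forall x y, IsLub (fun _ => True) ble x y (bsup x y)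
}.

Definition babs (X : BanachLattice) (x : X) : X := bsup X x (bopp X x).

Definition pos_cone (X : BanachLattice) : X -> Prop := fun x => ble X (bzero X) x.

Definition so (X : BanachLattice) (C : X -> Prop) : X -> Prop :=
  fun z => exists x, C x /\ ble X (babs X z) (babs X x).

Definition convex {X : BanachLattice} (U : X -> Prop) : Prop :=
  forall x y t, U x -> U y -> 0 <= t <= 1 ->
    U (badd X (bscal X t x) (bscal X (1 - t) y)).

Record LCHTopology (X : BanachLattice) := {
  topen : (X -> Prop) -> Prop;
  topen_full : topen (fun _ => True);
  topen_inter : forall U W, topen U -> topen W -> topen (fun x => U x /\ W x);
  topen_union : forall F : (X -> Prop) -> Prop, (forall U, F U -> topen U) ->
      topen (fun x => exists U, F U /\ U x);
  tadd_cont : forall U x y, topen U -> U (badd X x y) ->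
      exists V W, topen V /\ topen W /\ V x /\ W y /\
        forall v w, V v -> W w -> U (badd X v w);
  tscal_cont : forall U a x, topen U -> U (bscal X a x) ->
      exists d V, 0 < d /\ topen V /\ V x /\
        forall b v, Rabs (b - a) < d -> V v -> U (bscal X b v);
  tloc_convex : forall U, topen U -> U (bzero X) ->
      exists V, topen V /\ V (bzero X) /\ convex V /\ (forall v, V v -> U v);
  thausdorff : forall x y, x <> y -> exists U V, topen U /\ topen V /\ U x /\ V y /\
      (forall z, U z -> V z -> False)
}.

Arguments topen {X} l _.

Definition tclosed {X : BanachLattice} (T : LCHTopology X) (C : X -> Prop) : Prop :=
  topen T (fun x => ~ C x).

Definition tcompact {X : BanachLattice} (T : LCHTopology X) (C : X -> Prop) : Prop :=
  forall (J : Type) (U : J -> X -> Prop), (forall j, topen T (U j)) ->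
    (forall x, C x -> exists j, U j x) ->
    exists l : list J, forall x, C x -> exists j, In j l /\ U j x.

Definition linear_functional (X : BanachLattice) (f : X -> R) : Prop :=
  (forall x y, f (badd X x y) = f x + f y) /\ (forall a x, f (bscal X a x) = a * f x).

Definition tau_dual {X : BanachLattice} (T : LCHTopology X) (f : X -> R) : Prop :=
  linear_functional X f /\ (forall V, open_set V -> topen T (fun x => V (f x))).

Definition dual_le (X : BanachLattice) (f g : X -> R) : Prop :=
  forall x, pos_cone X x -> f x <= g x.

(* Riesz-Kantorovich set for (f v g)(x), x >= 0 *)
Definition RK_set (X : BanachLattice) (f g : X -> R) (x : X) : R -> Prop :=
  fun r => exists y, ble X (bzero X) y /\ ble X y x /\ r = f y + g (badd X x (bopp X y)).

Definition sufficiently_rich (X : BanachLattice) (T : LCHTopology X) : Prop :=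
  (* (i) X^tau is a Banach lattice whose lattice operations are given by the
     Riesz-Kantorovich formulas *)
  (exists N : (X -> R) -> R,
     IsBanachLattice (tau_dual T) (fun _ => 0) (fun f g x => f x + g x)
       (fun f x => - f x) (fun a f x => a * f x) (dual_le X) N /\
     (forall f g h, tau_dual T f -> tau_dual T g -> IsLub (tau_dual T) (dual_le X) f g h ->
        forall x, pos_cone X x -> is_lub (RK_set X f g x) (h x))) /\
  (* (ii) X_+ is tau-closed *)
  tclosed T (pos_cone X).

(* Main.v *)
Require Import Defs.
From Stdlib Require Import Reals List.
From Stdlib Require Import Classical FunctionalExtensionality PropExtensionality ClassicalChoice.
Open Scope R_scope.

Section L.
Variable X : BanachLattice.
Let A := bl_axioms X.
Notation add := (badd X).
Notation opp := (bopp X).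
Notation sc := (bscal X).
Notation le := (ble X).
Notation z0 := (bzero X).

Lemma addA x y z : add x (add y z) = add (add x y) z.
Proof. exact (bl_addA _ _ _ _ _ _ _ A x y z I I I). Qed.
Lemma addC x y : add x y = add y x.
Proof. exact (bl_addC _ _ _ _ _ _ _ A x y I I). Qed.
Lemma add0 x : add x z0 = x.
Proof. exact (bl_add0 _ _ _ _ _ _ _ A x I). Qed.
Lemma addN x : add x (opp x) = z0.
Proof. exact (bl_addN _ _ _ _ _ _ _ A x I). Qed.
Lemma leadd x y z : le x y -> le (add x z) (add y z).
Proof. exact (bl_le_add _ _ _ _ _ _ _ A x y z I I I). Qed.
Lemma letr x y z : le x y -> le y z -> le x z.
Proof. exact (bl_trans _ _ _ _ _ _ _ A x y z I I I). Qed.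
Lemma lerefl x : le x x.
Proof. exact (bl_refl _ _ _ _ _ _ _ A x I). Qed.

Lemma add0l x : add z0 x = x.
Proof. rewrite addC; apply add0. Qed.

Lemma sc0 x : sc 0 x = z0.
Proof.
  assert (H : add (sc 0 x) (sc 0 x) = sc 0 x).
  { rewrite <- (bl_scalDl _ _ _ _ _ _ _ A 0 0 x I). f_equal; ring. }
  rewrite <- (add0 (sc 0 x)), <- (addN (sc 0 x)), addA, H. reflexivity.
Qed.

Lemma oppE x : opp x = sc (-1) x.
Proof.
  rewrite <- (add0 (sc (-1) x)), <- (addN x), addA.
  replace (add (sc (-1) x) x) with (add (sc (-1) x) (sc 1 x))
    by (now rewrite (bl_scal1 _ _ _ _ _ _ _ A x I)).
  rewrite <- (bl_scalDl _ _ _ _ _ _ _ A (-1) 1 x I).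
  replace (-1 + 1) with 0 by ring. rewrite sc0, add0l. reflexivity.
Qed.

Lemma sub_pos a b : le a b -> le z0 (add b (opp a)).
Proof. intro H. rewrite <- (addN a). now apply leadd. Qed.

Lemma pos_sub a b : le z0 (add b (opp a)) -> le a b.
Proof.
  intro H. apply (leadd _ _ a) in H. rewrite add0l, <- addA in H.
  rewrite (addC (opp a) a), addN, add0 in H. exact H.
Qed.

Lemma abs_ge x : le x (babs X x) /\ le (opp x) (babs X x).
Proof. destruct (bsup_lub X x (opp x)) as [_ [H1 [H2 _]]]. split; assumption. Qed.

Lemma abs_le x y : le x y -> le (opp x) y -> le (babs X x) y.
Proof. intros H1 H2. destruct (bsup_lub X x (opp x)) as [_ [_ [_ H]]]. now apply H. Qed.

Lemma abs_pos x : le z0 x -> le (babs X x) x.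
Proof.
  intro H. apply abs_le. apply lerefl.
  apply (letr _ z0). 2: exact H.
  apply (leadd _ _ (opp x)) in H. rewrite add0l, addN in H. exact H.
Qed.

Lemma oppK_pos x z : le (opp z) x -> le z0 (add x z).
Proof.
  intro H. apply (leadd _ _ z) in H. rewrite addC, addN in H. exact H.
Qed.

Lemma pos_oppK x z : le z0 (add x z) -> le (opp z) x.
Proof.
  intro H. apply (leadd _ _ (opp z)) in H. rewrite add0l, <- addA, addN, add0 in H.
  exact H.
Qed.
End L.

Theorem mainTheorem10 (X : BanachLattice) (T : LCHTopology X)
    (Hrich : sufficiently_rich X T) (C : X -> Prop)
    (HCpos : forall x, C x -> pos_cone X x) (HCcomp : tcompact T C) :
  tclosed T (so X C).
Proof.
  destruct Hrich as [_ Hcl]. unfold tclosed in *.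
  set (O := fun x : X => ~ pos_cone X x) in Hcl.
  set (P := fun (x z' : X) => pos_cone X (badd X x (bscal X (-1) z')) /\ pos_cone X (badd X x z')).
  assert (Hso : forall z', so X C z' <-> exists x, C x /\ P x z').
  { intro z'; split.
    - intros [x [Cx Hle]]. exists x; split; auto.
      pose proof (abs_pos X x (HCpos x Cx)) as Hp.
      destruct (abs_ge X z') as [H1 H2].
      split; unfold pos_cone.
      + rewrite <- oppE. apply sub_pos. eapply letr; [exact H1|]. eapply letr; eauto.
      + apply oppK_pos. eapply letr; [exact H2|]. eapply letr; eauto.
    - intros [x [Cx [H1 H2]]]. exists x; split; auto.
      eapply letr. 2: exact (proj1 (abs_ge X x)).
      apply abs_le.
      + apply pos_sub. rewrite (oppE X z'). exact H1.
      + apply pos_oppK. exact H2. }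
  assert (Hloc : forall z, ~ so X C z -> exists N, topen T N /\ N z /\
                   forall z', N z' -> ~ so X C z').
  { intros z Hz.
    assert (Hch : forall j : {x | C x}, exists VN : (X -> Prop) * (X -> Prop),
              topen T (fst VN) /\ topen T (snd VN) /\ fst VN (proj1_sig j) /\ snd VN z /\
              forall v z', fst VN v -> snd VN z' -> ~ P v z').
    { intros [x Cx]; simpl.
      assert (HnP : ~ P x z) by (intro HP; apply Hz, Hso; eauto).
      destruct (classic (pos_cone X (badd X x (bscal X (-1) z)))) as [H1|H1].
      - assert (H2 : O (badd X x z)) by (intro H2; apply HnP; split; auto).
        destruct (tadd_cont X T O x z Hcl H2) as [V [W [oV [oW [Vx [Wz HVW]]]]]].
        exists (V, W); simpl; repeat split; auto.
        intros v z' Hv Hz' [_ Hp]. exact (HVW v z' Hv Hz' Hp).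
      - destruct (tadd_cont X T O x _ Hcl H1) as [V [W [oV [oW [Vx [Wz HVW]]]]]].
        destruct (tscal_cont X T W (-1) z oW Wz) as [d [N [dpos [oN [Nz HN]]]]].
        exists (V, N); simpl; repeat split; auto.
        intros v z' Hv Hz' [Hp _]. apply (HVW v _ Hv (HN (-1) z' ltac:(rewrite Rminus_diag, Rabs_R0; exact dpos) Hz') Hp). }
    apply choice in Hch. destruct Hch as [f Hf].
    destruct (HCcomp {x | C x} (fun j => fst (f j)) (fun j => proj1 (Hf j))) as [l Hl].
    { intros x Cx. exists (exist _ x Cx). apply (Hf (exist _ x Cx)). }
    exists (fun z' => forall j, In j l -> snd (f j) z').
    split; [|split].
    - clear Hl. induction l as [|j l IH].
      + replace (fun z' : X => forall j, In j nil -> snd (f j) z') with (fun _ : X => True).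
        apply topen_full. apply functional_extensionality; intro; apply propositional_extensionality; simpl; tauto.
      + replace (fun z' : X => forall j0, In j0 (j :: l) -> snd (f j0) z')
          with (fun z' => snd (f j) z' /\ (fun z' => forall j0, In j0 l -> snd (f j0) z') z').
        apply topen_inter; auto. apply (Hf j).
        apply functional_extensionality; intro; apply propositional_extensionality; simpl.
        split; [intros [H1 H2] j0 [<-|H]; auto | intros H; split; auto].
    - intros j _. apply (Hf j).
    - intros z' Hz' Hs. apply Hso in Hs. destruct Hs as [x [Cx Px]].
      destruct (Hl x Cx) as [j [Hj Vj]].
      apply (proj2 (proj2 (proj2 (proj2 (Hf j)))) x z' Vj (Hz' j Hj) Px). }
  replace (fun x => ~ so X C x) with
    (fun x => exists U, (topen T U /\ forall y, U y -> ~ so X C y) /\ U x).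
  - apply topen_union. intros U [H _]; exact H.
  - apply functional_extensionality; intro x; apply propositional_extensionality; split.
    + intros [U [[_ HU] Ux]]. now apply HU.
    + intro Hx. destruct (Hloc x Hx) as [N [oN [Nx HN]]]. exists N; auto.
Qed.
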